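(* Let $R$ be a ring with prime subring $P$ (the subring generated by $1$). Let $M$ be a submonoid of the unit group $U(R)$ and let $C$ be a subring of $R$. Suppose that: (1) the subring generated by $P$ and $M$ is the monoid ring $P[M]$ (i.e. the natural map $P[M]\to R$ is injective); (2) for each $c\in C$ and $f\in P[M]$, $cf=0$ implies $c=0$ or $f=0$; (3) every element of $M$ commutes with every element of $C$; (4) $M$ is an orderable monoid, i.e. it admits a total order $<$ such that $x<y$ implies $zx<zy$ and $xz<yz$ for all $x,y,z\in M$; (5) $M$ embeds in some group $H$ such that the subgroup of $H$ generated by $M$ has trivial center. Then the subring of $R$ generated by $C$ and $M$ is the monoid ring $C[M]$ (i.e. the natural map $C[M]\to R$ is injective). *)

(* Defs.v *)
From HB Require Import structures.
From mathcomp Require Import all_boot all_order all_algebra.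
Set Implicit Arguments. Unset Strict Implicit. Unset Printing Implicit Defensive.
Import GRing.Theory.
Local Open Scope ring_scope.

Definition is_unit (R : pzRingType) (x : R) : Prop :=
  exists y : R, x * y = 1 /\ y * x = 1.

Definition submonoid_of_units (R : pzRingType) (M : pred R) : Prop :=
  [/\ 1 \in M, {in M &, forall x y, x * y \in M} & {in M, forall x, is_unit x}].

Definition subring (R : pzRingType) (C : pred R) : Prop :=
  [/\ 1 \in C, {in C &, forall x y, x - y \in C} & {in C &, forall x y, x * y \in C}].

(* f lies in the subring generated by the prime subring P (image of Z) and M,
   i.e. f is an integral linear combination of elements of M. *)
Definition in_PM (R : pzRingType) (M : pred R) (f : R) : Prop :=
  exists n (m : 'I_n -> R) (a : 'I_n -> int),
    (forall i, m i \in M) /\ f = \sum_(i < n) (a i)%:~R * m i.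

(* The natural map P[M] -> R is injective. *)
Definition PM_is_monoid_ring (R : pzRingType) (M : pred R) : Prop :=
  forall n (m : 'I_n -> R) (a : 'I_n -> int),
    injective m -> (forall i, m i \in M) ->
    \sum_(i < n) (a i)%:~R * m i = 0 -> forall i, (a i)%:~R = 0 :> R.

Definition CM_is_monoid_ring (R : pzRingType) (C M : pred R) : Prop :=
  forall n (m : 'I_n -> R) (c : 'I_n -> R),
    injective m -> (forall i, m i \in M) -> (forall i, c i \in C) ->
    \sum_(i < n) c i * m i = 0 -> forall i, c i = 0.

Definition orderable_monoid (R : pzRingType) (M : pred R) : Prop :=
  exists lt : R -> R -> Prop,
    [/\ {in M, forall x, ~ lt x x},
        {in M & &, forall x y z, lt x y -> lt y z -> lt x z},
        {in M &, forall x y, x <> y -> lt x y \/ lt y x} &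
        {in M & &, forall x y z, lt x y -> lt (z * x) (z * y) /\ lt (x * z) (y * z)}].

Record group_str := GroupStr {
  gcar : Type;
  gmul : gcar -> gcar -> gcar;
  gone : gcar;
  ginv : gcar -> gcar;
  gmulA : forall x y z, gmul x (gmul y z) = gmul (gmul x y) z;
  gmul1l : forall x, gmul gone x = x;
  gmul1r : forall x, gmul x gone = x;
  gmulVl : forall x, gmul (ginv x) x = gone;
  gmulVr : forall x, gmul x (ginv x) = gone
}.

Inductive gen_subgroup (G : group_str) (S : gcar G -> Prop) : gcar G -> Prop :=
  | gen_one : gen_subgroup S (gone G)
  | gen_base x : S x -> gen_subgroup S x
  | gen_mul x y : gen_subgroup S x -> gen_subgroup S y -> gen_subgroup S (gmul x y)
  | gen_inv x : gen_subgroup S x -> gen_subgroup S (ginv x).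

Definition trivial_center (G : group_str) (K : gcar G -> Prop) : Prop :=
  forall h, K h -> (forall g, K g -> gmul h g = gmul g h) -> h = gone G.

Definition embeds_trivial_center (R : pzRingType) (M : pred R) : Prop :=
  exists (H : group_str) (phi : R -> gcar H),
    [/\ {in M &, injective phi},
        phi 1 = gone H,
        {in M &, forall x y, phi (x * y) = gmul (phi x) (phi y)} &
        trivial_center (gen_subgroup (fun h => exists2 m, m \in M & h = phi m))].

(* Main.v *)
Require Import Defs.
From HB Require Import structures.
From mathcomp Require Import all_boot all_order all_algebra.
Import GRing.Theory.
Local Open Scope ring_scope.

Set Implicit Arguments.

Definition fcoef {R : pzRingType} (A : seq (R*R)) (w : R) : R :=
  \sum_(p <- A | p.2 == w) p.1.
Definition fval {R : pzRingType} (A : seq (R*R)) : R := \sum_(p <- A) p.1 * p.2.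
Definition fmul3 {R : pzRingType} (A : seq (R*R)) (u : R) (B : seq (R*R)) :=
  [seq (p.1 * q.1, p.2 * u * q.2) | p <- A, q <- B].
Definition scl {R : pzRingType} (c : R) (A : seq (R*R)) := [seq (c * p.1, p.2) | p <- A].
Definition fzero {R : pzRingType} (A : seq (R*R)) := forall w, fcoef A w = 0.

Lemma sum_if1 {R : pzRingType} (U : seq R) (a : R) (F : R -> R) :
  uniq U -> a \in U -> \sum_(x <- U) (if a == x then F x else 0) = F a.
Proof.
move=> uU aU; rewrite (bigD1_seq a) //= eqxx big1 ?addr0 // => x /negbTE.
by rewrite eq_sym => ->.
Qed.

Lemma fcoef_cons {R : pzRingType} (p : R*R) A w :
  fcoef (p :: A) w = (if p.2 == w then p.1 else 0) + fcoef A w.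
Proof. by rewrite /fcoef big_cons; case: ifP; rewrite ?add0r. Qed.

Lemma fcoef_nil {R : pzRingType} w : fcoef ([::] : seq (R*R)) w = 0.
Proof. by rewrite /fcoef big_nil. Qed.

Lemma sum_coef {R : pzRingType} (A : seq (R*R)) (U : seq R) (h : R -> R) :
  uniq U -> {subset map snd A <= U} ->
  \sum_(p <- A) p.1 * h p.2 = \sum_(x <- U) fcoef A x * h x.
Proof.
move=> uU; elim: A => [|p A IH] sub.
  by rewrite big_nil big1 // => x _; rewrite fcoef_nil mul0r.
rewrite big_cons IH; last by move=> x xA; apply: sub; rewrite inE xA orbT.
rewrite -[in LHS](@sum_if1 _ U p.2 (fun x => p.1 * h x) uU); last by apply: sub; rewrite inE eqxx.
rewrite -big_split /=; apply: eq_bigr => x _.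
by rewrite fcoef_cons mulrDl; case: ifP; rewrite ?mul0r.
Qed.

Lemma fcoef_notin {R : pzRingType} (A : seq (R*R)) w : w \notin map snd A -> fcoef A w = 0.
Proof.
elim: A => [|p A IH] /=; first by rewrite fcoef_nil.
rewrite inE negb_or => /andP[ne nin]; rewrite fcoef_cons IH // addr0.
by rewrite eq_sym (negbTE ne).
Qed.

Lemma fcoef_fmul3 {R : pzRingType} (A B : seq (R*R)) u w (U V : seq R) :
  uniq U -> {subset map snd A <= U} -> uniq V -> {subset map snd B <= V} ->
  fcoef (fmul3 A u B) w =
  \sum_(x <- U) fcoef A x * \sum_(y <- V) fcoef B y * ((x * u * y == w)%:R).
Proof.
move=> uU sA uV sB.
rewrite /fcoef /fmul3 big_mkcond big_allpairs_dep /=.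
transitivity (\sum_(p <- A) p.1 * \sum_(q <- B) q.1 * ((p.2 * u * q.2 == w)%:R)).
  apply: eq_bigr => p _; rewrite mulr_sumr; apply: eq_bigr => q _.
  by case: eqP; rewrite ?mulr1 ?mulr0 ?mulrA.
rewrite (@sum_coef _ A U (fun x => \sum_(q <- B) q.1 * ((x * u * q.2 == w)%:R)) uU sA).
apply: eq_bigr => x _; congr (_ * _).
exact: (@sum_coef _ B V (fun y => ((x * u * y == w)%:R)) uV sB).
Qed.

Lemma fval_coef {R : pzRingType} (A : seq (R*R)) (U : seq R) :
  uniq U -> {subset map snd A <= U} -> fval A = \sum_(x <- U) fcoef A x * x.
Proof. move=> uU sA; exact: (@sum_coef _ A U id uU sA). Qed.

Unset Implicit Arguments.

Lemma gcancel_l (H : group_str) (x y z : gcar H) : gmul x y = gmul x z -> y = z.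
Proof.
move=> e; rewrite -(gmul1l y) -(gmul1l z) -(gmulVl x) -!gmulA e //.
Qed.

Lemma gcancel_r (H : group_str) (x y z : gcar H) : gmul y x = gmul z x -> y = z.
Proof.
move=> e; rewrite -(gmul1r y) -(gmul1r z) -(gmulVr x) !gmulA e //.
Qed.

Lemma gcomm_inv (H : group_str) (g x : gcar H) : gmul g x = gmul x g ->
  gmul g (ginv x) = gmul (ginv x) g.
Proof.
move=> e; apply: (@gcancel_l _ x); rewrite gmulA -e -gmulA gmulVr gmul1r.
by rewrite gmulA gmulVr gmul1l.
Qed.

Lemma center_lemma (R : pzRingType) (M : pred R) :
  submonoid_of_units M -> embeds_trivial_center M ->
  forall a b, a \in M -> b \in M -> (forall u, u \in M -> a * u * b = b * u * a) -> a = b.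
Proof.
case=> M1 MM _ [H [phi [inj ph1 phM tc]]] a b aM bM comm.
set A := phi a; set B := phi b.
have phi3 x y u : x \in M -> y \in M -> u \in M ->
    phi (x * u * y) = gmul (gmul (phi x) (phi u)) (phi y).
  by move=> xM yM uM; rewrite phM ?MM // phM.
have e3 u : u \in M -> gmul (gmul A (phi u)) B = gmul (gmul B (phi u)) A.
  by move=> uM; rewrite -phi3 // comm // phi3.
have eAB : gmul A B = gmul B A.
  by have := e3 1 M1; rewrite ph1 !gmul1r.
set g := gmul (ginv A) B.
have gBA : g = gmul B (ginv A).
  apply: (@gcancel_l _ A); apply: (@gcancel_r _ A).
  rewrite /g gmulA gmulVr gmul1l -gmulA -gmulA gmulVl gmul1r //.
have gX u : u \in M -> gmul g (phi u) = gmul (phi u) g.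
  move=> uM; apply: (@gcancel_l _ A); apply: (@gcancel_r _ A).
  rewrite {1}/g gBA !gmulA gmulVr gmul1l -(gmulA _ (ginv A) A) gmulVl gmul1r.
  by rewrite (e3 u uM).
have gen_comm h : gen_subgroup (fun h => exists2 m, m \in M & h = phi m) h ->
    gmul g h = gmul h g.
  elim=> [|x [m mM ->]|x y _ ex _ ey|x _ ex].
  - by rewrite gmul1l gmul1r.
  - exact: gX.
  - by rewrite gmulA ex -gmulA ey gmulA.
  - exact: gcomm_inv.
have gsub : gen_subgroup (fun h => exists2 m, m \in M & h = phi m) g.
  apply: gen_mul; apply: gen_inv || idtac; apply: gen_base.
    by exists a.
  by exists b.
have g1 := tc g gsub gen_comm.
apply: inj => //; rewrite -/A -/B.
by rewrite -(gmul1r A) -g1 /g gmulA gmulVr gmul1l.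
Qed.

Definition ordM {R : pzRingType} (M : pred R) (lt : R -> R -> Prop) :=
  [/\ {in M, forall x, ~ lt x x},
      {in M & &, forall x y z, lt x y -> lt y z -> lt x z},
      {in M &, forall x y, x <> y -> lt x y \/ lt y x} &
      {in M & &, forall x y z, lt x y -> lt (z * x) (z * y) /\ lt (x * z) (y * z)}].

Definition monos {R : pzRingType} (M : pred R) (A : seq (R * R)) :=
  forall p, p \in A -> p.2 \in M.

Definition IsLead {R : pzRingType} (M : pred R) lt (A : seq (R*R)) a :=
  [/\ a \in M, fcoef A a != 0 & forall x, fcoef A x != 0 -> x = a \/ lt a x].

Lemma fcoef_mem {R : pzRingType} (A : seq (R*R)) x : fcoef A x != 0 -> x \in map snd A.
Proof. by apply: contraR => /fcoef_notin ->. Qed.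

Lemma fcoef_M {R : pzRingType} (M : pred R) A x : monos M A -> fcoef A x != 0 -> x \in M.
Proof. by move=> mA /fcoef_mem /mapP [p pA ->]; apply: mA. Qed.


Lemma sum_neq0 {R : pzRingType} (T : eqType) (s : seq T) (F : T -> R) :
  \sum_(x <- s) F x != 0 -> exists2 x, x \in s & F x != 0.
Proof.
elim: s => [|x s IH]; first by rewrite big_nil eqxx.
rewrite big_cons; have [Fx|Fx] := eqVneq (F x) 0.
  by rewrite Fx add0r => /IH [y ys Fy]; exists y => //; rewrite inE ys orbT.
by move=> _; exists x; rewrite ?inE ?eqxx.
Qed.

Lemma lead_unique {R : pzRingType} (M : pred R) lt A a b :
  ordM M lt -> IsLead M lt A a -> IsLead M lt A b -> a = b.
Proof.
case=> I T _ _ [aM ca la] [bM cb lb].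
case: (la b cb) => [->//|lab]; case: (lb a ca) => [->//|lba].
by case: (I a aM); apply: (T a b a).
Qed.

Lemma min_exists {R : pzRingType} (M : pred R) lt (s : seq R) :
  ordM M lt -> {subset s <= M} -> s != [::] ->
  exists2 a, a \in s & forall x, x \in s -> x = a \/ lt a x.
Proof.
case=> I T Tot _; elim: s => [|x s IH] // sub _.
have xM : x \in M by apply: sub; rewrite inE eqxx.
have [->|ne] := eqVneq s [::].
  by exists x; rewrite ?inE ?eqxx // => y; rewrite inE => /eqP ->; left.
have sub' : {subset s <= M} by move=> y ys; apply: sub; rewrite inE ys orbT.
have [a aS ha] := IH sub' ne.
have aM : a \in M by apply: sub; rewrite inE aS orbT.
have [exa|nexa] := eqVneq x a.
  exists a; first by rewrite inE aS orbT.
  by move=> y; rewrite inE => /orP [/eqP ->|/ha]; [left|].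
case: (Tot x a xM aM (elimN eqP nexa)) => [xa|ax].
  exists x; first by rewrite inE eqxx.
  move=> y; rewrite inE => /orP [/eqP ->|ys]; first by left.
  case: (ha y ys) => [->|ay]; first by right.
  have yM : y \in M by apply: sub; rewrite inE ys orbT.
  right; exact: (T x a y xM aM yM xa ay).
exists a; first by rewrite inE aS orbT.
by move=> y; rewrite inE => /orP [/eqP ->|/ha]; [right|].
Qed.

Lemma compare {R : pzRingType} (M : pred R) lt a b u x y :
  ordM M lt -> {in M &, forall x y, x * y \in M} ->
  a \in M -> b \in M -> u \in M -> x \in M -> y \in M ->
  (x = a \/ lt a x) -> (y = b \/ lt b y) -> (x = a /\ y = b) \/ lt (a * u * b) (x * u * y).
Proof.
case=> I T _ Mul MM aM bM uM xM yM hx hy.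
have auM : a * u \in M by apply: (MM).
have xuM : x * u \in M by apply: (MM).
case: hx => [->|ax]; case: hy => [->|by_]; first by left.
- by right; case: (Mul b y (a * u) bM yM auM by_).
- right; have [_ h] := Mul a x u aM xM uM ax.
  by case: (Mul (a * u) (x * u) b auM xuM bM h).
- right; have h1 : lt (a * u * b) (a * u * y) by case: (Mul b y (a * u) bM yM auM by_).
  have [_ h] := Mul a x u aM xM uM ax.
  have h2 : lt (a * u * y) (x * u * y) by case: (Mul (a * u) (x * u) y auM xuM yM h).
  by apply: (T _ (a * u * y)) => //; apply: (MM).
Qed.

Lemma fzero_all {R : pzRingType} (A : seq (R*R)) :
  all (fun x => fcoef A x == 0) (map snd A) -> fzero A.
Proof.
move=> /allP h w; have [cw|] := eqVneq (fcoef A w) 0 => // /fcoef_mem wA.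
exact/eqP/h.
Qed.

Lemma lead_exists {R : pzRingType} (M : pred R) lt A :
  ordM M lt -> monos M A -> ~ fzero A -> exists a, IsLead M lt A a.
Proof.
move=> ho mA nz.
set S := [seq x <- undup (map snd A) | fcoef A x != 0].
have subS : {subset S <= M}.
  by move=> x; rewrite mem_filter => /andP [cx _]; exact: (@fcoef_M _ M A x mA cx).
have neS : S != [::].
  apply/negP => /eqP S0; apply: nz; apply: fzero_all; apply/allP => x xA.
  apply/negPn/negP => cx.
  have : x \in S by rewrite mem_filter cx mem_undup.
  by rewrite S0.
have [a aS ha] := @min_exists _ M lt S ho subS neS.
move: (aS); rewrite mem_filter => /andP [ca _].
exists a; split => //; first exact: subS.
move=> x cx; apply: ha; rewrite mem_filter cx mem_undup.
exact: fcoef_mem.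
Qed.

Lemma lead_mul {R : pzRingType} (M : pred R) lt A B a b u :
  ordM M lt -> {in M &, forall x y, x * y \in M} -> monos M A -> monos M B -> u \in M ->
  IsLead M lt A a -> IsLead M lt B b -> fcoef A a * fcoef B b != 0 ->
  IsLead M lt (fmul3 A u B) (a * u * b).
Proof.
move=> ho MM mA mB uM [aM ca la] [bM cb lb] nz.
have I : {in M, forall x, ~ lt x x} by case: ho.
have aubM : a * u * b \in M by apply: (MM) => //; apply: (MM).
have key x y : fcoef A x != 0 -> fcoef B y != 0 ->
    (x = a /\ y = b) \/ lt (a * u * b) (x * u * y).
  move=> cx cy; apply: (@compare _ M lt a b u x y ho MM aM bM uM (@fcoef_M _ M A x mA cx) (@fcoef_M _ M B y mB cy)).
    exact: la. exact: lb.
have neq x y : fcoef A x != 0 -> fcoef B y != 0 -> ~ (x = a /\ y = b) ->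
    (x * u * y == a * u * b) = false.
  move=> cx cy nxy; apply/negbTE/eqP => e.
  case: (key x y cx cy) => // h; apply: (I _ aubM); by rewrite e in h.
set U := undup (map snd A); set V := undup (map snd B).
have uU : uniq U by apply: undup_uniq.
have uV : uniq V by apply: undup_uniq.
have sU : {subset map snd A <= U} by move=> x; rewrite mem_undup.
have sV : {subset map snd B <= V} by move=> x; rewrite mem_undup.
have cE : fcoef (fmul3 A u B) (a * u * b) = fcoef A a * fcoef B b.
  rewrite (fcoef_fmul3 A B u _ uU sU uV sV).
  transitivity (\sum_(x <- U) (if a == x then fcoef A a * fcoef B b else 0)); last first.
    by rewrite (@sum_if1 _ U a (fun _ => fcoef A a * fcoef B b)) // mem_undup; apply: fcoef_mem.
  apply: eq_bigr => x _; have [<-|nax] := eqVneq a x.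
    congr (_ * _).
    transitivity (\sum_(y <- V) (if b == y then fcoef B y else 0)); last first.
      by rewrite (@sum_if1 _ V b (fun y => fcoef B y)) // mem_undup; apply: fcoef_mem.
    apply: eq_bigr => y _; have [<-|nby] := eqVneq b y; first by rewrite eqxx mulr1.
    have [->|cy] := eqVneq (fcoef B y) 0; first by rewrite mul0r.
    rewrite neq ?mulr0 //; first by move=> [_ e]; move: nby; rewrite e eqxx.
  have [->|cx] := eqVneq (fcoef A x) 0; first by rewrite mul0r.
  rewrite big1 ?mulr0 // => y _.
  have [->|cy] := eqVneq (fcoef B y) 0; first by rewrite mul0r.
  by rewrite neq ?mulr0 // => [[e _]]; move: nax; rewrite e eqxx.
split => //; first by rewrite cE.
move=> w; rewrite (fcoef_fmul3 A B u _ uU sU uV sV) => /sum_neq0 [x _].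
have [->|cx] := eqVneq (fcoef A x) 0; first by rewrite mul0r eqxx.
move=> h.
have : \sum_(y <- V) fcoef B y * ((x * u * y == w)%:R) != 0.
  by apply: contraNneq h => ->; rewrite mulr0.
move=> /sum_neq0 [y _].
have [->|cy] := eqVneq (fcoef B y) 0; first by rewrite mul0r eqxx.
have [e|ne] := eqVneq (x * u * y) w; last by rewrite mulr0 eqxx.
move=> _; case: (key x y cx cy) => [[ex ey]|hl]; first by left; rewrite -e ex ey.
by right; rewrite -e.
Qed.

Definition Clist {R : pzRingType} (C M : pred R) (A : seq (R*R)) :=
  forall p, p \in A -> p.1 \in C /\ p.2 \in M.
Definition Plist {R : pzRingType} (M : pred R) (A : seq (R*R)) :=
  monos M A /\ (forall p, p \in A -> exists z : int, p.1 = z%:~R).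

Lemma intr_comm {R : pzRingType} (z : int) (x : R) : z%:~R * x = x * z%:~R.
Proof. by rewrite mulrzl mulrzr. Qed.

Lemma fcoef_cat {R : pzRingType} (A B : seq (R*R)) w : fcoef (A ++ B) w = fcoef A w + fcoef B w.
Proof. by rewrite /fcoef big_cat. Qed.

Lemma fcoef_scl {R : pzRingType} (c : R) A w : fcoef (scl c A) w = c * fcoef A w.
Proof. by rewrite /fcoef /scl big_map mulr_sumr. Qed.

Lemma fval_cat {R : pzRingType} (A B : seq (R*R)) : fval (A ++ B) = fval A + fval B.
Proof. by rewrite /fval big_cat. Qed.

Lemma fval_scl {R : pzRingType} (c : R) A : fval (scl c A) = c * fval A.
Proof. by rewrite /fval /scl big_map mulr_sumr; apply: eq_bigr => p _; rewrite mulrA. Qed.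

Lemma fval_fmul3 {R : pzRingType} (A B : seq (R*R)) u :
  (forall p q, p \in A -> q \in B -> q.1 * (p.2 * u) = p.2 * u * q.1) ->
  fval (fmul3 A u B) = fval A * u * fval B.
Proof.
move=> h; rewrite /fval /fmul3 big_allpairs_dep /= mulr_suml mulr_suml.
apply: eq_big_seq => p pA; rewrite mulr_sumr; apply: eq_big_seq => q qB /=.
transitivity (p.1 * ((q.1 * (p.2 * u)) * q.2)); first by rewrite !mulrA.
by rewrite h // !mulrA.
Qed.

Lemma fcoef_int {R : pzRingType} (M : pred R) f w : Plist M f -> exists z : int, fcoef f w = z%:~R.
Proof.
case=> _; rewrite /fcoef; elim: f => [|p f IH] h; first by exists 0; rewrite big_nil.
have h' : forall q, q \in f -> exists z : int, q.1 = z%:~R.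
  by move=> q qf; apply: h; rewrite inE qf orbT.
have [z hz] := IH h'; have [z0 hz0] := h p (mem_head _ _).
rewrite big_cons; case: ifP => _; last by exists z.
by exists (z0 + z); rewrite intrD -hz0 -hz.
Qed.

Lemma C0 {R : pzRingType} (C : pred R) : subring C -> 0 \in C.
Proof. by case=> C1 CB _; rewrite -(subrr 1); apply: CB. Qed.

Lemma CN {R : pzRingType} (C : pred R) x : subring C -> x \in C -> - x \in C.
Proof. move=> sC xC; rewrite -sub0r; case: (sC) => _ CB _; apply: CB => //; exact: C0. Qed.

Lemma CD {R : pzRingType} (C : pred R) x y : subring C -> x \in C -> y \in C -> x + y \in C.
Proof.
move=> sC xC yC; rewrite -(opprK y); case: (sC) => _ CB _; apply: CB => //; exact: CN.
Qed.

Lemma CMul {R : pzRingType} (C : pred R) x y : subring C -> x \in C -> y \in C -> x * y \in C.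
Proof. by case=> _ _ CM; apply: CM. Qed.

Lemma Cint {R : pzRingType} (C : pred R) (z : int) : subring C -> z%:~R \in C.
Proof.
move=> sC.
have hn n : n%:R \in C.
  elim: n => [|n IH]; first exact: C0.
  by rewrite mulrS; apply: CD => //; case: sC.
case: z => n; first by have -> : (Posz n)%:~R = n%:R :> R by [].
rewrite NegzE intrN; apply: CN => //.
by have -> : (Posz n.+1)%:~R = n.+1%:R :> R by [].
Qed.

Lemma Csum {R : pzRingType} (C : pred R) (T : Type) (s : seq T) (F : T -> R) :
  subring C -> (forall t, F t \in C) -> \sum_(t <- s) F t \in C.
Proof.
move=> sC h; elim: s => [|t s IH]; first by rewrite big_nil; exact: C0.
by rewrite big_cons; apply: CD.
Qed.

Lemma fcoef_C {R : pzRingType} (C M : pred R) A w : subring C -> Clist C M A -> fcoef A w \in C.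
Proof.
move=> sC; elim: A => [|p A IH] h; first by rewrite fcoef_nil; exact: C0.
rewrite fcoef_cons; apply: CD => //.
  by case: ifP => _; [case: (h p (mem_head _ _))|exact: C0].
by apply: IH => q qA; apply: h; rewrite inE qA orbT.
Qed.

Lemma conv_suml {R : pzRingType} (A B : seq (R*R)) (D : seq (R * seq (R*R))) u w :
  (forall x, fcoef A x = \sum_(d <- D) d.1 * fcoef d.2 x) ->
  fcoef (fmul3 A u B) w = \sum_(d <- D) d.1 * fcoef (fmul3 d.2 u B) w.
Proof.
move=> h.
set U := undup (map snd A ++ map snd B ++ flatten [seq map snd d.2 | d <- D]).
have uU : uniq U by apply: undup_uniq.
have sA : {subset map snd A <= U} by move=> x xA; rewrite mem_undup mem_cat xA.
have sB : {subset map snd B <= U}.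
  by move=> x xB; rewrite mem_undup !mem_cat xB orbT.
have sD d : d \in D -> {subset map snd d.2 <= U}.
  move=> dD x xd; rewrite mem_undup !mem_cat; apply/orP; right; apply/orP; right.
  by apply/flattenP; exists (map snd d.2) => //; apply: map_f.
rewrite (fcoef_fmul3 A B u w uU sA uU sB).
transitivity (\sum_(d <- D) d.1 * \sum_(x <- U) fcoef d.2 x *
                 \sum_(y <- U) fcoef B y * ((x * u * y == w)%:R)); last first.
  by apply: eq_big_seq => d dD; rewrite (fcoef_fmul3 d.2 B u w uU (sD d dD) uU sB).
transitivity (\sum_(x <- U) \sum_(d <- D) d.1 * (fcoef d.2 x *
                 \sum_(y <- U) fcoef B y * ((x * u * y == w)%:R))).
  by apply: eq_bigr => x _; rewrite h mulr_suml; apply: eq_bigr => d _; rewrite mulrA.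
by rewrite exchange_big; apply: eq_bigr => d _; rewrite mulr_sumr.
Qed.

Lemma conv_sumr {R : pzRingType} (A B : seq (R*R)) (D : seq (R * seq (R*R))) u w :
  (forall y, fcoef B y = \sum_(d <- D) d.1 * fcoef d.2 y) ->
  (forall x d, d \in D -> fcoef A x * d.1 = d.1 * fcoef A x) ->
  fcoef (fmul3 A u B) w = \sum_(d <- D) d.1 * fcoef (fmul3 A u d.2) w.
Proof.
move=> h hc.
set U := undup (map snd A ++ map snd B ++ flatten [seq map snd d.2 | d <- D]).
have uU : uniq U by apply: undup_uniq.
have sA : {subset map snd A <= U} by move=> x xA; rewrite mem_undup mem_cat xA.
have sB : {subset map snd B <= U}.
  by move=> x xB; rewrite mem_undup !mem_cat xB orbT.
have sD d : d \in D -> {subset map snd d.2 <= U}.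
  move=> dD x xd; rewrite mem_undup !mem_cat; apply/orP; right; apply/orP; right.
  by apply/flattenP; exists (map snd d.2) => //; apply: map_f.
rewrite (fcoef_fmul3 A B u w uU sA uU sB).
transitivity (\sum_(d <- D) d.1 * \sum_(x <- U) fcoef A x *
                 \sum_(y <- U) fcoef d.2 y * ((x * u * y == w)%:R)); last first.
  by apply: eq_big_seq => d dD; rewrite (fcoef_fmul3 A d.2 u w uU sA uU (sD d dD)).
transitivity (\sum_(x <- U) \sum_(d <- D) d.1 * (fcoef A x *
                 \sum_(y <- U) fcoef d.2 y * ((x * u * y == w)%:R))); last first.
  by rewrite exchange_big; apply: eq_bigr => d _; rewrite mulr_sumr.
apply: eq_bigr => x _.
transitivity (fcoef A x * \sum_(d <- D) d.1 *
                 \sum_(y <- U) fcoef d.2 y * ((x * u * y == w)%:R)).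
  congr (_ * _).
  transitivity (\sum_(y <- U) \sum_(d <- D) d.1 * (fcoef d.2 y * ((x * u * y == w)%:R))).
    by apply: eq_bigr => y _; rewrite h mulr_suml; apply: eq_bigr => d _; rewrite mulrA.
  by rewrite exchange_big; apply: eq_bigr => d _; rewrite mulr_sumr.
rewrite mulr_sumr; apply: eq_big_seq => d dD.
by rewrite !mulrA hc.
Qed.

Lemma in_PM_int {R : pzRingType} (M : pred R) (z : int) : 1 \in M -> in_PM M (z%:~R).
Proof.
move=> M1; exists 1%N, (fun _ => 1), (fun _ => z); split => //.
by rewrite big_ord1 mulr1.
Qed.

Lemma in_PM_fval {R : pzRingType} (M : pred R) f : Plist M f -> in_PM M (fval f).
Proof.
case=> mf hf.
have : forall i : 'I_(size f), exists z : int, (nth (0, 1) f i).1 = z%:~R.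
  by move=> i; apply: hf; apply: mem_nth.
case/fin_all_exists => a ha.
exists (size f), (fun i => (nth (0,1) f i).2), a; split.
  by move=> i; apply: mf; apply: mem_nth.
rewrite /fval (big_nth (0,1)) big_mkord; apply: eq_bigr => i _; by rewrite ha.
Qed.

Lemma PM_fzero {R : pzRingType} (M : pred R) f :
  PM_is_monoid_ring M -> Plist M f -> fval f = 0 -> fzero f.
Proof.
move=> PM pf; set U := undup (map snd f).
have uU : uniq U by apply: undup_uniq.
have sU : {subset map snd f <= U} by move=> x; rewrite mem_undup.
rewrite (fval_coef f uU sU).
have : forall i : 'I_(size U), exists z : int, fcoef f (nth 1 U i) = z%:~R.
  by move=> i; apply: fcoef_int pf.
case/fin_all_exists => a ha.
have minj : injective (fun i : 'I_(size U) => nth 1 U i).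
  by move=> i j /eqP; rewrite nth_uniq // => /eqP/val_inj.
have mM : forall i : 'I_(size U), nth 1 U i \in M.
  move=> i; have : nth 1 U i \in map snd f by rewrite -mem_undup mem_nth.
  by case/mapP => p pf' ->; case: pf => mf _; apply: mf.
move=> s0.
have := PM _ _ a minj mM.
have -> : \sum_(i < size U) (a i)%:~R * nth 1 U i = \sum_(x <- U) fcoef f x * x.
  by rewrite (big_nth 1) big_mkord; apply: eq_bigr => i _; rewrite ha.
move=> /(_ s0) h0 w.
have [wU|wU] := boolP (w \in U); last by apply: fcoef_notin; rewrite -mem_undup.
have iw : (index w U < size U)%N by rewrite index_mem.
by rewrite -(nth_index 1 wU) -[index w U]/(nat_of_ord (Ordinal iw)) ha h0.
Qed.

Lemma Clist_monos {R : pzRingType} (C M : pred R) A : Clist C M A -> monos M A.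
Proof. by move=> h p pA; case: (h p pA). Qed.

Lemma IsLead_ext {R : pzRingType} (M : pred R) lt A B a :
  (forall w, fcoef A w = fcoef B w) -> IsLead M lt B a -> IsLead M lt A a.
Proof. by move=> e [aM ca la]; split; rewrite ?e // => x; rewrite e; apply: la. Qed.

Lemma nz_mul_int {R : pzRingType} (M C : pred R) c (z : int) :
  1 \in M ->
  (forall c f, c \in C -> in_PM M f -> c * f = 0 -> c = 0 \/ f = 0) ->
  c \in C -> c != 0 -> z%:~R != 0 :> R -> c * z%:~R != 0.
Proof.
move=> M1 H2 cC cn zn; apply/eqP => e.
case: (H2 c _ cC (in_PM_int M z M1) e) => /eqP; [exact/negP|exact/negP].
Qed.

Lemma leads_eq {R : pzRingType} (M C : pred R) lt E f a b :
  ordM M lt -> {in M &, forall x y, x * y \in M} -> 1 \in M -> subring C ->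
  (forall c f, c \in C -> in_PM M f -> c * f = 0 -> c = 0 \/ f = 0) ->
  (forall a b, a \in M -> b \in M -> (forall u, u \in M -> a * u * b = b * u * a) -> a = b) ->
  Clist C M E -> Plist M f ->
  (forall u, u \in M -> forall w, fcoef (fmul3 E u f) w = fcoef (fmul3 f u E) w) ->
  IsLead M lt E a -> IsLead M lt f b -> a = b.
Proof.
move=> ho MM M1 sC H2 cent cE pf hc la lb.
have mE := @Clist_monos _ C M E cE; have mf : monos M f by case: pf.
case: (la) => aM ca _; case: (lb) => bM cb _.
have [z hz] := @fcoef_int _ M f b pf.
have aC : fcoef E a \in C by exact: (@fcoef_C _ C M E a sC cE).
have nz1 : fcoef E a * fcoef f b != 0.
  by rewrite hz; apply: (@nz_mul_int _ M C _ z M1 H2 aC ca); rewrite -hz.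
have nz2 : fcoef f b * fcoef E a != 0 by rewrite hz intr_comm -hz.
apply: cent => // u uM.
have l1 := @lead_mul _ M lt E f a b u ho MM mE mf uM la lb nz1.
have l2 := @lead_mul _ M lt f E b a u ho MM mf mE uM lb la nz2.
have l2' : IsLead M lt (fmul3 E u f) (b * u * a) by exact: (@IsLead_ext _ M lt _ _ _ (hc u uM) l2).
exact: (@lead_unique _ M lt _ _ _ ho l1 l2').
Qed.

Lemma ZL {R : pzRingType} (M C : pred R) lt E f :
  ordM M lt -> {in M &, forall x y, x * y \in M} -> 1 \in M -> subring C ->
  PM_is_monoid_ring M ->
  (forall c f, c \in C -> in_PM M f -> c * f = 0 -> c = 0 \/ f = 0) ->
  (forall a b, a \in M -> b \in M -> (forall u, u \in M -> a * u * b = b * u * a) -> a = b) ->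
  Clist C M E -> fval E = 0 -> Plist M f -> ~ fzero f ->
  (forall u, u \in M -> forall w, fcoef (fmul3 E u f) w = fcoef (fmul3 f u E) w) ->
  fzero E.
Proof.
move=> ho MM M1 sC PM H2 cent cE vE pf nzf hc.
have mE := @Clist_monos _ C M E cE; have mf : monos M f by case: pf.
have notfz A : ~~ all (fun x => fcoef A x == 0) (map snd A) -> ~ fzero A.
  by move=> h fz; move/negP: h; apply; apply/allP => x _; apply/eqP.
case: (boolP (all (fun x => fcoef E x == 0) (map snd E))) => [h|/notfz nzE].
  exact: fzero_all.
exfalso.
have [a la] := @lead_exists _ M lt E ho mE nzE.
have [b lb] := @lead_exists _ M lt f ho mf nzf.
have eab := @leads_eq _ M C lt E f a b ho MM M1 sC H2 cent cE pf hc la lb.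
subst b.
case: (la) => aM ca _.
have [z hz] := @fcoef_int _ M f a pf.
have aC : fcoef E a \in C by exact: (@fcoef_C _ C M E a sC cE).
set E' := scl (fcoef f a) E ++ scl (- fcoef E a) f.
set D := [:: (fcoef f a, E); (- fcoef E a, f)].
have cE' x : fcoef E' x = \sum_(d <- D) d.1 * fcoef d.2 x.
  by rewrite /E' fcoef_cat !fcoef_scl !big_cons big_nil addr0.
have CE' : Clist C M E'.
  move=> p; rewrite mem_cat => /orP [] /mapP [q qin ->] /=.
    case: (cE q qin) => q1 q2; split => //; apply: CMul => //; rewrite hz; exact: Cint.
  case: pf => mf' hf; have [zq ->] := hf q qin; split; last exact: mf'.
  by apply: CMul => //; [exact: CN | exact: Cint].
have hc' : forall u, u \in M -> forall w, fcoef (fmul3 E' u f) w = fcoef (fmul3 f u E') w.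
  move=> u uM w.
  rewrite (@conv_suml _ E' f D u w cE') (@conv_sumr _ f E' D u w cE'); last first.
    move=> x d; rewrite !inE => /orP [] /eqP -> /=;
    have [zx ->] := @fcoef_int _ M f x pf; exact: intr_comm.
  by rewrite !big_cons !big_nil /= hc.
case: (boolP (all (fun x => fcoef E' x == 0) (map snd E'))) => [h'|/notfz nzE'].
  have fz' := @fzero_all _ E' h'.
  have v0 : fval E' = 0.
    rewrite (@fval_coef _ E' _ (undup_uniq (map snd E'))); last by move=> x; rewrite mem_undup.
    by rewrite big1 // => x _; rewrite fz' mul0r.
  move: v0; rewrite /E' fval_cat !fval_scl vE mulr0 add0r mulNr => /eqP.
  rewrite oppr_eq0 => /eqP e.
  case: (H2 _ _ aC (@in_PM_fval _ M f pf) e) => [e0|e0]; first by move/eqP: ca.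
  by apply: nzf; apply: (@PM_fzero _ M f PM pf).
have mE' := @Clist_monos _ C M E' CE'.
have [a' la'] := @lead_exists _ M lt E' ho mE' nzE'.
have ea := @leads_eq _ M C lt E' f a' a ho MM M1 sC H2 cent CE' pf hc' la' lb.
subst a'.
case: la' => _ c' _; move: c'.
by rewrite cE' !big_cons big_nil addr0 /= hz mulNr intr_comm subrr eqxx.
Qed.

Lemma mem_fmul3 {R : pzRingType} (A B : seq (R*R)) u r : r \in fmul3 A u B ->
  exists p q, [/\ p \in A, q \in B & r = (p.1 * q.1, p.2 * u * q.2)].
Proof. by case/allpairsP => [[p q] [pA qB ->]]; exists p, q. Qed.

Lemma mem_scl {R : pzRingType} (c : R) A r : r \in scl c A ->
  exists2 p, p \in A & r = (c * p.1, p.2).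
Proof. by case/mapP => p pA ->; exists p. Qed.

Lemma Plist_G {R : pzRingType} (M : pred R) g f u :
  {in M &, forall x y, x * y \in M} -> u \in M -> Plist M g -> Plist M f ->
  Plist M (fmul3 g u f ++ scl (-1) (fmul3 f u g)).
Proof.
move=> MM uM [mg ig] [mf iF]; split.
  move=> r; rewrite mem_cat => /orP [/mem_fmul3 [p [q [pA qB ->]]]|
                                    /mem_scl [r' /mem_fmul3 [p [q [pA qB ->]]] ->]] /=.
    by apply: (MM); [apply: (MM) => //; apply: mg | apply: mf].
  by apply: (MM); [apply: (MM) => //; apply: mf | apply: mg].
move=> r; rewrite mem_cat => /orP [/mem_fmul3 [p [q [pA qB ->]]]|
                                  /mem_scl [r' /mem_fmul3 [p [q [pA qB ->]]] ->]] /=.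
  by have [z1 ->] := ig p pA; have [z2 ->] := iF q qB; exists (z1 * z2); rewrite intrM.
have [z1 ->] := iF p pA; have [z2 ->] := ig q qB; exists (- (z1 * z2)).
by rewrite intrN intrM mulN1r.
Qed.

Lemma notfz {R : pzRingType} (A : seq (R*R)) :
  ~~ all (fun x => fcoef A x == 0) (map snd A) -> ~ fzero A.
Proof. by move=> h fz; move/negP: h; apply; apply/allP => x _; apply/eqP. Qed.

Lemma main_ind {R : pzRingType} (M C : pred R) lt :
  ordM M lt -> {in M &, forall x y, x * y \in M} -> 1 \in M -> subring C ->
  PM_is_monoid_ring M ->
  (forall c f, c \in C -> in_PM M f -> c * f = 0 -> c = 0 \/ f = 0) ->
  (forall a b, a \in M -> b \in M -> (forall u, u \in M -> a * u * b = b * u * a) -> a = b) ->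
  {in M & C, forall m c, m * c = c * m} ->
  forall n (D : seq (R * seq (R*R))) E, size D = n ->
  Clist C M E -> fval E = 0 -> (forall d, d \in D -> d.1 \in C /\ Plist M d.2) ->
  (forall x, fcoef E x = \sum_(d <- D) d.1 * fcoef d.2 x) -> fzero E.
Proof.
move=> ho MM M1 sC PM H2 cent comm n; elim: n => [|n IH] [|[c f] D] E //=.
  by move=> _ _ _ _ hE w; rewrite hE big_nil.
move=> [sD] cE vE hD hE.
have [cC pf] := hD (c, f) (mem_head _ _).
have hD' : forall d, d \in D -> d.1 \in C /\ Plist M d.2.
  by move=> d dD; apply: hD; rewrite inE dD orbT.
case: (boolP (all (fun x => fcoef f x == 0) (map snd f))) => [hf|/notfz nzf].
  apply: (IH D E sD cE vE hD') => x.
  by rewrite hE big_cons /= (@fzero_all _ f hf x) mulr0 add0r.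
apply: (@ZL _ M C lt E f ho MM M1 sC PM H2 cent cE vE pf nzf) => u uM w.
have mf : monos M f by case: pf.
have mE := @Clist_monos _ C M E cE.
set G := fmul3 E u f ++ scl (-1) (fmul3 f u E).
set D'' := [seq (d.1, fmul3 d.2 u f ++ scl (-1) (fmul3 f u d.2)) | d <- D].
have fcomm y d : fcoef f y * d = d * fcoef f y.
  by have [zy ->] := @fcoef_int _ M f y pf; exact: intr_comm.
have hG x : fcoef G x = \sum_(d <- D'') d.1 * fcoef d.2 x.
  rewrite /G fcoef_cat fcoef_scl mulN1r.
  rewrite (@conv_suml _ E f ((c, f) :: D) u x hE).
  rewrite (@conv_sumr _ f E ((c, f) :: D) u x hE); last by move=> y d _; apply: fcomm.
  rewrite !big_cons /= opprD addrACA subrr add0r /D'' big_map -sumrB.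
  by apply: eq_bigr => d _; rewrite /= fcoef_cat fcoef_scl mulN1r mulrBr.
have CG : Clist C M G.
  move=> r; rewrite mem_cat => /orP [/mem_fmul3 [p [q [pA qB ->]]]|
                                    /mem_scl [r' /mem_fmul3 [p [q [pA qB ->]]] ->]] /=.
    case: (cE p pA) => p1 p2; case: pf => _ iF; have [z ->] := iF q qB.
    split; first by apply: CMul => //; exact: Cint.
    by apply: (MM); [apply: (MM) | apply: mf].
  case: (cE q qB) => q1 q2; case: pf => _ iF; have [z ->] := iF p pA.
  split; first by apply: CMul => //; [apply: CN => //; case: sC | apply: CMul => //; exact: Cint].
  by apply: (MM); [apply: (MM) => //; apply: mf | ].
have vG : fval G = 0.
  rewrite /G fval_cat fval_scl.
  rewrite (@fval_fmul3 _ E f u); last first.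
    move=> p q _ qf; case: pf => _ iF; have [z ->] := iF q qf; exact: intr_comm.
  rewrite (@fval_fmul3 _ f E u); last first.
    move=> p q pf' qE; case: (cE q qE) => q1 _; symmetry; apply: comm => //.
    by apply: (MM) => //; apply: mf.
  by rewrite vE !mul0r !mulr0 addr0.
have hD'' : forall d, d \in D'' -> d.1 \in C /\ Plist M d.2.
  move=> d /mapP [d0 d0D ->] /=; case: (hD' d0 d0D) => d1 pd; split => //.
  exact: Plist_G.
have sD'' : size D'' = n by rewrite size_map.
have := IH D'' G sD'' CG vG hD'' hG w.
rewrite /G fcoef_cat fcoef_scl mulN1r => /eqP; rewrite subr_eq0 => /eqP.
done.
Qed.

Theorem lemma2p1 (R : pzRingType) (M C : pred R) :
  submonoid_of_units M ->
  subring C ->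
  PM_is_monoid_ring M ->
  (forall c f, c \in C -> in_PM M f -> c * f = 0 -> c = 0 \/ f = 0) ->
  {in M & C, forall m c, m * c = c * m} ->
  orderable_monoid M ->
  embeds_trivial_center M ->
  CM_is_monoid_ring C M.
Proof.
move=> sm sC PM H2 comm [lt [I T Tot Mul]] emb n m c minj mM cC rel i.
have ho : ordM M lt by split.
case: (sm) => M1 MM _.
have cent := @center_lemma R M sm emb.
pose E : seq (R*R) := [seq (c j, m j) | j <- index_enum 'I_n].
pose D : seq (R * seq (R*R)) := [seq (c j, [:: (1 : R, m j)]) | j <- index_enum 'I_n].
have cE : Clist C M E.
  by move=> p /mapP [j _ ->]; split; [exact: cC | exact: mM].
have vE : fval E = 0 by rewrite /fval /E big_map.
have hD : forall d, d \in D -> d.1 \in C /\ Plist M d.2.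
  move=> d /mapP [j _ ->] /=; split; first exact: cC.
  split; first by move=> p; rewrite inE => /eqP -> /=; exact: mM.
  by move=> p; rewrite inE => /eqP -> /=; exists 1.
have hE : forall x, fcoef E x = \sum_(d <- D) d.1 * fcoef d.2 x.
  move=> x; rewrite /fcoef /E /D !big_map big_mkcond; apply: eq_bigr => j _ /=.
  by rewrite big_cons big_nil /=; case: eqP; rewrite ?addr0 ?mulr1 ?mulr0.
have fz := @main_ind R M C lt ho MM M1 sC PM H2 cent comm (size D) D E erefl cE vE hD hE.
have := fz (m i); rewrite /fcoef /E big_map.
rewrite (big_pred1 i) //= => j /=; exact: (inj_eq minj).
Qed.
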